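(* Let $\alpha\geq 0$ and set $$f_{\alpha}(x)=\begin{cases} 0 & x<\sigma_0\\ \frac{2}{\alpha}(x-\sigma_0) & \sigma_0\leq x < (1+\frac{\alpha}{2})\sigma_0\\ (1+\frac{\alpha}{2})^{-1}x & (1+\frac{\alpha}{2})\sigma_0\leq x. \end{cases}$$ Then $\mathfrak{S}_{f_{\alpha}}(F)$ solves $$\operatorname{arg\,min}_X \mathscr{N}_F^{**}(X)+\frac{\alpha}{2} \|X\|_2^2,$$ where $\mathscr{N}_F^{**}(X)= \sum_j\left( \sigma_0^2-\left(\max\left(\sigma_0-\sigma_j(X),0\right)\right)^2\right) + \|X-F\|_2^2$.
   Context: $X,F$ are $M\times N$ matrices, $\|\cdot\|_2$ is the Frobenius norm, $\sigma_j(X)$ are the singular values of $X$, and $\sigma_0>0$ is a parameter. $\mathscr{N}_F^{**}$ is the convex envelope of $\mathscr{N}_F(X)=\sigma_0^2\operatorname{rank}(X)+\|X-F\|_2^2$. If $F=U\Sigma_\phi V^*$ is a singular value decomposition with singular values $\phi=(\phi_j)$, then for $f:[0,\infty)\to\mathbb{C}$, $\mathfrak{S}_f(F)=U\Sigma_{f(\phi)}V^*$, i.e. the singular values $\phi_j$ are replaced by $f(\phi_j)$. *)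

(* Defs.v *)
(* Scalars: an arbitrary numClosedFieldType C (e.g. algC, or
   the complex numbers R[i]); real quantities are elements of C that are real. *)
From HB Require Import structures.
From mathcomp Require Import all_boot all_order all_algebra.
Set Implicit Arguments. Unset Strict Implicit. Unset Printing Implicit Defensive.
Import Order.TTheory GRing.Theory Num.Theory.
Local Open Scope ring_scope.

Section Defs.
Variable C : numClosedFieldType.

Definition adjmx (m n : nat) (X : 'M[C]_(m, n)) : 'M[C]_(n, m) :=
  \matrix_(i < n, j < m) (X j i)^*.

Definition unitary (n : nat) (U : 'M[C]_n) : Prop := U *m adjmx U = 1%:M.

Definition rdiag (m n : nat) (s : nat -> C) : 'M[C]_(m, n) :=
  \matrix_(i < m, j < n) (if (i : nat) == j then s i else 0).

Definition is_svd (m n : nat) (U : 'M[C]_m) (s : nat -> C) (V : 'M[C]_n)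
  (X : 'M[C]_(m, n)) : Prop :=
  [/\ unitary U, unitary V,
      (forall j, (j < minn m n)%N -> 0 <= s j),
      (forall i j, (i <= j)%N -> (j < minn m n)%N -> s j <= s i)
    & X = U *m rdiag m n s *m adjmx V].

Definition Sfun (m n : nat) (f : C -> C) (U : 'M[C]_m) (phi : nat -> C)
  (V : 'M[C]_n) : 'M[C]_(m, n) :=
  U *m rdiag m n (fun j => f (phi j)) *m adjmx V.

Definition frob2 (m n : nat) (X : 'M[C]_(m, n)) : C :=
  \sum_(i < m) \sum_(j < n) `|X i j| ^+ 2.

Definition maxr0 (x : C) : C := if 0 <= x then x else 0.

(* N_F^{**}(X), where s are the singular values of X *)
Definition Nss (m n : nat) (sigma0 : C) (F X : 'M[C]_(m, n)) (s : nat -> C) : C :=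
  \sum_(j < minn m n) (sigma0 ^+ 2 - (maxr0 (sigma0 - s j)) ^+ 2) + frob2 (X - F).

Definition objective (m n : nat) (sigma0 alpha : C) (F X : 'M[C]_(m, n))
  (s : nat -> C) : C :=
  Nss sigma0 F X s + alpha / 2%:R * frob2 X.

Definition f_alpha (sigma0 alpha x : C) : C :=
  if x < sigma0 then 0
  else if x < (1 + alpha / 2%:R) * sigma0 then 2%:R / alpha * (x - sigma0)
  else (1 + alpha / 2%:R)^-1 * x.

End Defs.

(* Main.v *)
Require Import Defs.
From mathcomp Require Import all_boot all_order all_algebra.
From mathcomp Require Import ring zify.
Import Order.TTheory GRing.Theory Num.Theory.
Set Implicit Arguments. Unset Strict Implicit. Unset Printing Implicit Defensive.
Local Open Scope ring_scope.

Section Mx.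
Variable C : numClosedFieldType.

Definition natf (p q : nat) (A : 'M[C]_(p, q)) (i j : nat) : C :=
  match (insub i : option 'I_p), (insub j : option 'I_q) with
  | Some i', Some j' => A i' j'
  | _, _ => 0 end.

Lemma natfE p q (A : 'M[C]_(p, q)) (i : 'I_p) (j : 'I_q) : natf A i j = A i j.
Proof. by rewrite /natf !valK. Qed.

Lemma natf_outl p q (A : 'M[C]_(p, q)) i j : (p <= i)%N -> natf A i j = 0.
Proof. by move=> h; rewrite /natf insubF // ltnNge h. Qed.

Lemma natf_outr p q (A : 'M[C]_(p, q)) i j : (q <= j)%N -> natf A i j = 0.
Proof. by move=> h; rewrite /natf [insub j]insubF ?ltnNge ?h //; case: insub. Qed.

Lemma rdiag_mulmx p q k (s : nat -> C) (A : 'M[C]_(q, k)) (i : 'I_p) (j : 'I_k) :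
  (rdiag p q s *m A) i j = s i * natf A i j.
Proof.
rewrite mxE; case: (ltnP i q) => h.
  rewrite (bigD1 (Ordinal h)) //= mxE eqxx big1 ?addr0.
    by have -> : natf A i j = natf A (Ordinal h) j by []; rewrite natfE.
  move=> l hl; rewrite mxE; case: eqP => [e|]; last by rewrite mul0r.
  by case/eqP: hl; apply: val_inj; rewrite /= -e.
rewrite natf_outl // mulr0 big1 // => l _; rewrite mxE.
case: eqP => [e|]; last by rewrite mul0r.
by move: (ltn_ord l); rewrite -e ltnNge h.
Qed.

Lemma adjmxM p q k (A : 'M[C]_(p, q)) (B : 'M[C]_(q, k)) :
  adjmx (A *m B) = adjmx B *m adjmx A.
Proof.
apply/matrixP => i j; rewrite !mxE rmorph_sum; apply: eq_bigr => l _.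
by rewrite !mxE rmorphM mulrC.
Qed.

Lemma adjmxK p q (A : 'M[C]_(p, q)) : adjmx (adjmx A) = A.
Proof. by apply/matrixP => i j; rewrite !mxE conjCK. Qed.

Lemma adjmx_rdiag p q (s : nat -> C) : adjmx (rdiag p q s) = rdiag q p (fun j => (s j)^*).
Proof.
apply/matrixP => i j; rewrite !mxE eq_sym.
by case: eqP => [->|]; rewrite ?conjC0.
Qed.

Lemma adjmxB p q (A B : 'M[C]_(p, q)) : adjmx (A - B) = adjmx A - adjmx B.
Proof. by apply/matrixP => i j; rewrite !mxE rmorphB. Qed.

Lemma unitaryC p (A : 'M[C]_p) : unitary A -> adjmx A *m A = 1%:M.
Proof. exact: mulmx1C. Qed.

Lemma sum_narrow (G : nat -> C) r m : (r <= m)%N ->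
  (forall i, (r <= i)%N -> (i < m)%N -> G i = 0) ->
  \sum_(i < m) G i = \sum_(i < r) G i.
Proof.
move=> hrm hG; rewrite -!(big_mkord xpredT) (big_cat_nat (leq0n r) hrm) /=.
rewrite [X in _ + X]big1_seq ?addr0 // => i /andP[_]; rewrite mem_index_iota => /andP[h1 h2].
exact: hG.
Qed.

Lemma sum_widen_le (G : nat -> C) r m : (r <= m)%N ->
  (forall i, (r <= i)%N -> (i < m)%N -> 0 <= G i) ->
  \sum_(i < r) G i <= \sum_(i < m) G i.
Proof.
move=> hrm hG; rewrite -!(big_mkord xpredT) (big_cat_nat (leq0n r) hrm) /=.
rewrite lerDl big_seq_cond; apply: sumr_ge0 => i /andP[].
by rewrite mem_index_iota => /andP[h1 h2] _; apply: hG.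
Qed.

Lemma unitary_prod p (A B : 'M[C]_p) : unitary A -> unitary B ->
  unitary (adjmx A *m B) /\ adjmx (adjmx A *m B) *m (adjmx A *m B) = 1%:M.
Proof.
move=> hA hB.
have h : unitary (adjmx A *m B).
  rewrite /unitary adjmxM adjmxK mulmxA -(mulmxA _ B) hB mulmx1.
  exact: unitaryC.
by split => //; apply: unitaryC.
Qed.

Lemma unit_rows p (W : 'M[C]_p) : unitary W -> forall i, (i < p)%N ->
  \sum_(k < p) `|natf W i k| ^+ 2 = 1.
Proof.
move=> hW i h; have := congr1 (fun M : 'M[C]_p => M (Ordinal h) (Ordinal h)) hW.
rewrite /= !mxE eqxx /= => e; apply: (etrans _ e); apply: eq_bigr => k _.
by rewrite mxE -normCK (natfE W (Ordinal h) k).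
Qed.

Lemma unit_cols p (W : 'M[C]_p) : adjmx W *m W = 1%:M -> forall i, (i < p)%N ->
  \sum_(k < p) `|natf W k i| ^+ 2 = 1.
Proof.
move=> hW i h; have := congr1 (fun M : 'M[C]_p => M (Ordinal h) (Ordinal h)) hW.
rewrite /= !mxE eqxx /= => e; apply: (etrans _ e); apply: eq_bigr => k _.
by rewrite mxE mulrC -normCK (natfE W k (Ordinal h)).
Qed.

Lemma frob2_tr p q (A : 'M[C]_(p, q)) : frob2 A = \tr (A *m adjmx A).
Proof.
rewrite /frob2 /mxtrace; apply: eq_bigr => i _; rewrite mxE.
by apply: eq_bigr => j _; rewrite mxE normCK.
Qed.

Lemma frob2_unit p q (U : 'M[C]_p) (V : 'M[C]_q) (M : 'M[C]_(p, q)) :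
  unitary U -> unitary V -> frob2 (U *m M *m adjmx V) = frob2 M.
Proof.
move=> hU hV; rewrite !frob2_tr !adjmxM adjmxK.
have -> : U *m M *m adjmx V *m (V *m (adjmx M *m adjmx U)) =
  U *m ((M *m adjmx M) *m adjmx U).
  by rewrite -!mulmxA (mulmxA (adjmx V)) (unitaryC hV) mul1mx.
by rewrite mxtrace_mulC -(mulmxA (M *m adjmx M)) (unitaryC hU) mulmx1.
Qed.

Lemma frob2_rdiag p q (t : nat -> C) :
  frob2 (rdiag p q t) = \sum_(j < minn p q) `|t j| ^+ 2.
Proof.
have inner : forall i : 'I_p, \sum_(j < q) `|rdiag p q t i j| ^+ 2 =
    (fun n : nat => if (n < q)%N then `|t n| ^+ 2 else 0) i.
  move=> i /=; case: ltnP => h.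
    rewrite (bigD1 (Ordinal h)) //= mxE eqxx big1 ?addr0 // => l hl.
    rewrite mxE; case: eqP => [e|_]; last by rewrite normr0 expr0n.
    by case/eqP: hl; apply: val_inj; rewrite /= -e.
  apply: big1 => l _; rewrite mxE; case: eqP => [e|_]; last by rewrite normr0 expr0n.
  by move: (ltn_ord l); rewrite -e ltnNge h.
rewrite /frob2 (eq_bigr _ (fun i _ => inner i)).
rewrite (sum_narrow (G := fun n : nat => if (n < q)%N then `|t n| ^+ 2 else 0) (geq_minl p q)).
  apply: eq_bigr => j _; rewrite ifT //; apply: leq_trans (ltn_ord j) (geq_minr p q).
move=> i h1 h2; rewrite ifF //; apply/negbTE; rewrite -leqNgt.
lia.
Qed.

Lemma rdiagB p q (a b : nat -> C) :
  rdiag p q a - rdiag p q b = rdiag p q (fun j => a j - b j).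
Proof. by apply/matrixP => i j; rewrite !mxE; case: eqP; rewrite ?subr0. Qed.

Definition cross p q (X F : 'M[C]_(p, q)) := \sum_i \sum_j X i j * (F i j)^*.

Lemma cross_tr p q (X F : 'M[C]_(p, q)) : cross X F = \tr (X *m adjmx F).
Proof.
rewrite /cross /mxtrace; apply: eq_bigr => i _; rewrite mxE.
by apply: eq_bigr => j _; rewrite mxE.
Qed.

Lemma frob2_sub p q (X F : 'M[C]_(p, q)) :
  frob2 (X - F) = frob2 X + frob2 F - (cross X F + (cross X F)^*).
Proof.
rewrite /frob2 /cross rmorph_sum -!big_split -sumrB /=.
apply: eq_bigr => i _; rewrite rmorph_sum -!big_split -sumrB /=.
apply: eq_bigr => j _; rewrite !normCK !mxE rmorphB rmorphM /= ?conjCK; ring.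
Qed.

Lemma rearr (R : numDomainType) (c : R) (r : nat) : forall (s p : nat -> R) (D : nat -> nat -> R),
  (forall i, (i < r)%N -> 0 <= s i) -> (forall i j, (i <= j)%N -> (j < r)%N -> s j <= s i) ->
  (forall i, (i < r)%N -> 0 <= p i) -> (forall i j, (i <= j)%N -> (j < r)%N -> p j <= p i) ->
  (forall i k, (i < r)%N -> (k < r)%N -> 0 <= D i k) ->
  (forall i, (i < r)%N -> \sum_(k < r) D i k <= c) ->
  (forall k, (k < r)%N -> \sum_(i < r) D i k <= c) ->
  \sum_(i < r) \sum_(k < r) s i * p k * D i k <= c * \sum_(i < r) s i * p i.
Proof.
elim: r => [|r IH] s p D s0 sm p0 pm D0 Dr Dc.
  by rewrite !big_ord0 mulr0.
set t := s r; set u := p r.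
set s' := fun i => s i - t; set p' := fun i => p i - u.
have t0 : 0 <= t by apply: s0.
have u0 : 0 <= u by apply: p0.
have s'0 : forall i, (i <= r)%N -> 0 <= s' i.
  by move=> i hi; rewrite /s' subr_ge0; apply: sm.
have p'0 : forall i, (i <= r)%N -> 0 <= p' i.
  by move=> i hi; rewrite /p' subr_ge0; apply: pm.
have E1 : forall i k, s i * p k * D i k =
   t * u * D i k + t * (p' k * D i k) + u * (s' i * D i k) + s' i * p' k * D i k.
  by move=> i k; rewrite /s' /p'; ring.
have E2 : forall i, s i * p i = t * u + t * p' i + u * s' i + s' i * p' i.
  by move=> i; rewrite /s' /p'; ring.
under eq_bigr do under eq_bigr do rewrite E1.
under eq_bigr do rewrite !big_split /=.
rewrite !big_split /=.
under [X in _ <= c * X]eq_bigr do rewrite E2.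
rewrite !big_split /= !mulrDr.
apply: lerD; first apply: lerD; first apply: lerD.
- rewrite big_distrr /=; apply: ler_sum => i _.
  rewrite -big_distrr /= [c * _]mulrC; apply: ler_wpM2l; first by apply: mulr_ge0.
  exact: Dr.
- rewrite exchange_big /= big_distrr /=; apply: ler_sum => k hk.
  rewrite -big_distrr /= -big_distrr /=.
  have -> : c * (t * p' k) = t * (p' k * c) by ring.
  apply: ler_wpM2l => //; apply: ler_wpM2l; first by apply: p'0; rewrite -ltnS.
  exact: Dc.
- rewrite big_distrr /=; apply: ler_sum => i _.
  rewrite -big_distrr /=.
  have -> : \sum_(i0 < r.+1) s' i * D i i0 = s' i * \sum_(i0 < r.+1) D i i0 by rewrite big_distrr.
  have -> : c * (u * s' i) = u * (s' i * c) by ring.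
  apply: ler_wpM2l => //; apply: ler_wpM2l; first by apply: s'0; rewrite -ltnS.
  exact: Dr.
- have s'r : s' r = 0 by rewrite /s' subrr.
  have p'r : p' r = 0 by rewrite /p' subrr.
  rewrite big_ord_recr /= s'r [X in _ + X]big1 ?addr0 => [|k _]; last by rewrite !mul0r.
  under eq_bigr do rewrite big_ord_recr /= p'r mulr0 mul0r addr0.
  rewrite [X in _ <= c * X]big_ord_recr /= s'r mul0r addr0.
  apply: IH.
  + by move=> i hi; apply: s'0; apply: ltnW.
  + by move=> i j hij hj; rewrite /s' lerD2r; apply: sm => //; apply: ltnW.
  + by move=> i hi; apply: p'0; apply: ltnW.
  + by move=> i j hij hj; rewrite /p' lerD2r; apply: pm => //; apply: ltnW.
  + by move=> i k hi hk; apply: D0; apply: ltnW.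
  + move=> i hi; apply: le_trans (Dr i (ltnW hi)).
    rewrite [X in _ <= X]big_ord_recr /= lerDl; apply: D0 => //; exact: ltnW.
  + move=> k hk; apply: le_trans (Dc k (ltnW hk)).
    rewrite [X in _ <= X]big_ord_recr /= lerDl; apply: D0 => //; exact: ltnW.
Qed.

Lemma cross_bound m n (U : 'M[C]_m) (phi : nat -> C) (V : 'M[C]_n) F
   (U' : 'M[C]_m) (s : nat -> C) (V' : 'M[C]_n) X :
  is_svd U phi V F -> is_svd U' s V' X ->
  cross X F + (cross X F)^* <= 2%:R * \sum_(j < minn m n) s j * phi j.
Proof.
case=> hU hV p0 pm ->; case=> hU' hV' s0 sm ->.
set r := minn m n.
set Q := adjmx V' *m V; set P := adjmx U *m U'.
have eqc : cross (U' *m rdiag m n s *m adjmx V') (U *m rdiag m n phi *m adjmx V) =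
    \sum_(i < r) \sum_(k < r) s i * natf Q i k * ((phi k)^* * natf P k i).
  rewrite cross_tr !adjmxM !adjmxK.
  have -> : U' *m rdiag m n s *m adjmx V' *m (V *m (adjmx (rdiag m n phi) *m adjmx U))
     = U' *m (rdiag m n s *m Q *m (adjmx (rdiag m n phi) *m adjmx U)).
    by rewrite /Q !mulmxA.
  rewrite mxtrace_mulC.
  have -> : rdiag m n s *m Q *m (adjmx (rdiag m n phi) *m adjmx U) *m U'
     = (rdiag m n s *m Q) *m (adjmx (rdiag m n phi) *m P).
    by rewrite /P !mulmxA.
  rewrite adjmx_rdiag /mxtrace.
  under eq_bigr => i _ do rewrite mxE.
  under eq_bigr => i _ do under eq_bigr => k _ do rewrite !rdiag_mulmx.
  have hk : forall i : nat, forall k, (r <= k)%N -> (k < n)%N ->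
      s i * natf Q i k * ((phi k)^* * natf P k i) = 0.
    by move=> i k h1 h2; rewrite (natf_outl P) ?mulr0 //; rewrite /r in h1; lia.
  under eq_bigr => i _ do rewrite (sum_narrow (geq_minr m n) (hk i)).
  have hi : forall i : nat, (r <= i)%N -> (i < m)%N ->
      \sum_(k < r) s i * natf Q i k * ((phi k)^* * natf P k i) = 0.
    move=> i h1 h2; apply: big1 => k _.
    by rewrite (natf_outl Q) ?mulr0 ?mul0r //; rewrite /r in h1; lia.
  by rewrite (sum_narrow (geq_minl m n) hi).
rewrite eqc rmorph_sum -big_split /=.
have sr : forall i, (i < r)%N -> (s i)^* = s i.
  by move=> i h; apply: conj_Creal; apply: ger0_real; apply: s0.
have pr : forall i, (i < r)%N -> (phi i)^* = phi i.
  by move=> i h; apply: conj_Creal; apply: ger0_real; apply: p0.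
set D := fun i k => `|natf Q i k| ^+ 2 + `|natf P k i| ^+ 2.
apply: (@le_trans _ _ (\sum_(i < r) \sum_(k < r) s i * phi k * D i k)).
  apply: ler_sum => i _; rewrite rmorph_sum -big_split /=; apply: ler_sum => k _.
  have -> : s i * natf Q i k * ((phi k)^* * natf P k i) +
      (s i * natf Q i k * ((phi k)^* * natf P k i))^* =
      s i * phi k * (D i k - `|natf Q i k - (natf P k i)^*| ^+ 2).
    rewrite /D !normCK !rmorphM rmorphB /= !conjCK (sr i (ltn_ord i)) (pr k (ltn_ord k)); ring.
  apply: ler_wpM2l; first by apply: mulr_ge0; [apply: s0 | apply: p0].
  by rewrite gerBl exprn_ge0.
have [uQ uQ'] := unitary_prod hV' hV.
have [uP uP'] := unitary_prod hU hU'.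
have hr1 : (r <= n)%N by apply: geq_minr.
have hr2 : (r <= m)%N by apply: geq_minl.
apply: rearr => //.
- by move=> i k _ _; rewrite /D addr_ge0 // exprn_ge0.
- move=> i hi; rewrite /D big_split /= mulr2n; apply: lerD.
    rewrite -(unit_rows uQ (leq_trans hi hr1)).
    by apply: (sum_widen_le (G := fun k => `|natf Q i k| ^+ 2) hr1) => k _ _; rewrite exprn_ge0.
  rewrite -(unit_cols uP' (leq_trans hi hr2)).
  by apply: (sum_widen_le (G := fun k => `|natf P k i| ^+ 2) hr2) => k _ _; rewrite exprn_ge0.
- move=> k hk; rewrite /D big_split /= mulr2n; apply: lerD.
    rewrite -(unit_cols uQ' (leq_trans hk hr1)).
    by apply: (sum_widen_le (G := fun i => `|natf Q i k| ^+ 2) hr1) => i _ _; rewrite exprn_ge0.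
  rewrite -(unit_rows uP (leq_trans hk hr2)).
  by apply: (sum_widen_le (G := fun i => `|natf P k i| ^+ 2) hr2) => i _ _; rewrite exprn_ge0.
Qed.
End Mx.
Section Scal.
Variable C : numClosedFieldType.
Variables (sigma0 alpha phi : C).
Hypotheses (s0 : 0 < sigma0) (a0 : 0 <= alpha) (p0 : 0 <= phi).

Definition Hf (x : C) := sigma0 ^+ 2 - maxr0 (sigma0 - x) ^+ 2 + (x - phi) ^+ 2 + alpha / 2%:R * x ^+ 2.
Definition Hlow (x : C) := alpha / 2%:R * x ^+ 2 + 2%:R * x * (sigma0 - phi) + phi ^+ 2.
Definition Hhigh (x : C) := sigma0 ^+ 2 + (x - phi) ^+ 2 + alpha / 2%:R * x ^+ 2.

Lemma sq_ge0 (x : C) : x \is Num.real -> 0 <= x ^+ 2.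
Proof. by move=> hx; apply: real_exprn_even_ge0. Qed.

Lemma Hf_low x : x <= sigma0 -> Hf x = Hlow x.
Proof.
move=> h; rewrite /Hf /Hlow /maxr0 subr_ge0 h; ring.
Qed.

Lemma Hf_high x : sigma0 <= x -> Hf x = Hhigh x.
Proof.
move=> h; rewrite /Hf /Hhigh /maxr0 subr_ge0.
case: ifP => h2; last by rewrite expr0n /= subr0.
have -> : x = sigma0 by apply/eqP; rewrite eq_le h h2.
rewrite subrr expr0n /= subr0 //.
Qed.

Lemma Hf_ge_low x : x \is Num.real -> Hlow x <= Hf x.
Proof.
move=> xr; have sr : sigma0 \is Num.real by apply: gtr0_real.
have [h|h] := real_leP xr sr.
  by rewrite Hf_low.
rewrite Hf_high; last exact: ltW.
have -> : Hhigh x = Hlow x + (x - sigma0) ^+ 2 by rewrite /Hhigh /Hlow; ring.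
by rewrite lerDl sq_ge0 // rpredB.
Qed.

Lemma scal x : 0 <= x ->
  0 <= f_alpha sigma0 alpha phi /\ Hf (f_alpha sigma0 alpha phi) <= Hf x.
Proof.
move=> x0.
have sr : sigma0 \is Num.real by apply: gtr0_real.
have pr : phi \is Num.real by apply: ger0_real.
have xr : x \is Num.real by apply: ger0_real.
have h20 : (2%:R : C) != 0 by rewrite pnatr_eq0.
have a20 : 0 <= alpha / 2%:R by apply: divr_ge0 => //; apply: ler0n.
rewrite /f_alpha; case: ifP => h1.
  split => //; rewrite Hf_low; last exact: ltW.
  apply: (le_trans _ (@Hf_ge_low x xr)).
  have -> : Hlow x = Hlow 0 + x * (alpha / 2%:R * x + 2%:R * (sigma0 - phi)) by rewrite /Hlow; ring.
  rewrite lerDl; apply: mulr_ge0 => //; apply: addr_ge0; first exact: mulr_ge0.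
  by apply: mulr_ge0; [apply: ler0n | rewrite subr_ge0 ltW].
have hp : sigma0 <= phi by rewrite real_leNgt ?h1.
case: ifP => h2.
  have an0 : alpha != 0.
    by apply/eqP => ha; move: h2; rewrite ha mul0r addr0 mul1r h1.
  set t := 2%:R / alpha * (phi - sigma0).
  have t0 : 0 <= t by apply: mulr_ge0; [apply: divr_ge0 => //; apply: ler0n | rewrite subr_ge0].
  have ts : t <= sigma0.
    rewrite -subr_le0.
    have -> : t - sigma0 = 2%:R / alpha * (phi - (1 + alpha / 2%:R) * sigma0) by rewrite /t; field.
    apply: mulr_ge0_le0; first by apply: divr_ge0 => //; apply: ler0n.
    by rewrite subr_le0 ltW.
  split => //; rewrite Hf_low //.
  apply: (le_trans _ (@Hf_ge_low x xr)).
  have -> : Hlow x = Hlow t + alpha / 2%:R * (x - t) ^+ 2 by rewrite /Hlow /t; field.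
  rewrite lerDl; apply: mulr_ge0 => //; apply: sq_ge0; apply: rpredB => //; exact: ger0_real.
have hb : (1 + alpha / 2%:R) * sigma0 <= phi.
  by rewrite real_leNgt ?h2 //; apply: rpredM => //; apply: rpredD => //; apply: ger0_real.
have b0 : 0 < 1 + alpha / 2%:R by apply: lt_le_trans (ltr01 : (0:C) < 1) _; rewrite lerDl.
have bn0 : 1 + alpha / 2%:R != 0 by rewrite gt_eqF.
have h2a : 2%:R + alpha != 0 by rewrite gt_eqF //; apply: lt_le_trans (ltr0n _ 2 : (0:C) < 2%:R) _; rewrite lerDl.
set t := (1 + alpha / 2%:R)^-1 * phi.
have ts : sigma0 <= t.
  rewrite -subr_ge0.
  have -> : t - sigma0 = (1 + alpha / 2%:R)^-1 * (phi - (1 + alpha / 2%:R) * sigma0) by rewrite /t; field.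
  by apply: mulr_ge0; [rewrite invr_ge0 ltW | rewrite subr_ge0].
have t0 : 0 <= t by apply: le_trans ts; exact: ltW.
split => //; rewrite Hf_high //.
have [h|h] := real_leP xr sr.
  rewrite Hf_low //.
  have -> : Hlow x = Hlow sigma0 + (sigma0 - x) * (2%:R * (phi - (1 + alpha / 2%:R) * sigma0) + alpha / 2%:R * (sigma0 - x)) by rewrite /Hlow; ring.
  have -> : Hlow sigma0 = Hhigh t + (1 + alpha / 2%:R) * (sigma0 - t) ^+ 2 by rewrite /Hlow /Hhigh /t; field.
  rewrite -addrA lerDl; apply: addr_ge0.
    apply: mulr_ge0; first exact: ltW.
    by apply: sq_ge0; apply: rpredB => //; exact: ger0_real.
  apply: mulr_ge0; first by rewrite subr_ge0.
  apply: addr_ge0; first by apply: mulr_ge0; [apply: ler0n | rewrite subr_ge0].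
  by apply: mulr_ge0 => //; rewrite subr_ge0.
rewrite Hf_high; last exact: ltW.
have -> : Hhigh x = Hhigh t + (1 + alpha / 2%:R) * (x - t) ^+ 2 by rewrite /Hhigh /t; field.
rewrite lerDl; apply: mulr_ge0; first exact: ltW.
by apply: sq_ge0; apply: rpredB => //; exact: ger0_real.
Qed.

End Scal.

Lemma sum_id (C : numClosedFieldType) (r : nat) (a b d : nat -> C) (k : C) :
  \sum_(j < r) (a j + (b j - d j) ^+ 2 + k * b j ^+ 2) =
  \sum_(j < r) a j + (\sum_(j < r) b j ^+ 2 + \sum_(j < r) d j ^+ 2
     - 2%:R * \sum_(j < r) b j * d j) + k * \sum_(j < r) b j ^+ 2.
Proof.
elim: r => [|r IH]; first by rewrite !big_ord0; ring.
by rewrite !big_ord_recr /= IH; ring.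
Qed.

Lemma sum3 (C : numClosedFieldType) (r : nat) (a c e : nat -> C) (k : C) :
  \sum_(j < r) (a j + c j + k * e j) =
  \sum_(j < r) a j + \sum_(j < r) c j + k * \sum_(j < r) e j.
Proof.
elim: r => [|r IH]; first by rewrite !big_ord0; ring.
by rewrite !big_ord_recr /= IH; ring.
Qed.

Theorem proposition3 (C : numClosedFieldType) (m n : nat) (sigma0 alpha : C)
  (F : 'M[C]_(m, n)) (U : 'M[C]_m) (phi : nat -> C) (V : 'M[C]_n) :
  0 < sigma0 -> 0 <= alpha -> is_svd U phi V F ->
  forall (X : 'M[C]_(m, n)) (U' : 'M[C]_m) (s : nat -> C) (V' : 'M[C]_n),
    is_svd U' s V' X ->
    objective sigma0 alpha F (Sfun (f_alpha sigma0 alpha) U phi V)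
      (fun j => f_alpha sigma0 alpha (phi j))
    <= objective sigma0 alpha F X s.
Proof.
move=> s0 a0 hF X U' s V' hX.
have hF' := hF; case: hF' => hU hV p0 pm Fdef.
have hX' := hX; case: hX' => hU' hV' sp0 sm Xdef.
set t := fun j => f_alpha sigma0 alpha (phi j).
have tj : forall j, (j < minn m n)%N ->
    0 <= t j /\ Hf sigma0 alpha (phi j) (t j) <= Hf sigma0 alpha (phi j) (s j).
  by move=> j h; apply: scal => //; [apply: p0 | apply: sp0].
have rl : forall (g : nat -> C), (forall j, (j < minn m n)%N -> g j \is Num.real) ->
    \sum_(j < minn m n) `|g j| ^+ 2 = \sum_(j < minn m n) g j ^+ 2.
  by move=> g hg; apply: eq_bigr => j _; rewrite real_normK // hg.
have rp : forall j, (j < minn m n)%N -> phi j \is Num.real.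
  by move=> j h; apply: ger0_real; apply: p0.
have rs : forall j, (j < minn m n)%N -> s j \is Num.real.
  by move=> j h; apply: ger0_real; apply: sp0.
have rt : forall j, (j < minn m n)%N -> t j \is Num.real.
  by move=> j h; apply: ger0_real; case: (tj j h).
have fX : frob2 X = \sum_(j < minn m n) s j ^+ 2.
  by rewrite Xdef frob2_unit // frob2_rdiag rl.
have fF : frob2 F = \sum_(j < minn m n) phi j ^+ 2.
  by rewrite Fdef frob2_unit // frob2_rdiag rl.
have LHS : objective sigma0 alpha F (Sfun (f_alpha sigma0 alpha) U phi V) t =
    \sum_(j < minn m n) Hf sigma0 alpha (phi j) (t j).
  rewrite /objective /Nss /Sfun Fdef -mulmxBl -mulmxBr rdiagB !frob2_unit //.
  rewrite !frob2_rdiag /Hf (@sum3 C (minn m n) (fun j => sigma0 ^+ 2 - maxr0 (sigma0 - t j) ^+ 2)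
     (fun j => (t j - phi j) ^+ 2) (fun j => t j ^+ 2) (alpha / 2%:R)).
  rewrite (rl (fun j => t j - phi j)); last first.
    by move=> j h; apply: rpredB; [apply: rt | apply: rp].
  by rewrite (rl t).
rewrite LHS.
apply: (@le_trans _ _ (\sum_(j < minn m n) Hf sigma0 alpha (phi j) (s j))).
  by apply: ler_sum => j _; case: (tj j (ltn_ord j)).
rewrite /Hf (@sum_id C (minn m n) (fun j => sigma0 ^+ 2 - maxr0 (sigma0 - s j) ^+ 2) s phi (alpha / 2%:R)) /objective /Nss frob2_sub fX fF.
rewrite lerD2r lerD2l lerD2l lerN2.
exact: cross_bound hF hX.
Qed.
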